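(* Assume CAT (in the form stated in the context). Let $p\ge 2$ be a natural number and let $T\subseteq{}^{<\omega_1}p$ be a binarisable special Aronszajn tree. Then there is a colouring $c:T^{[2]}\to p+1=\{0,1,\dots,p\}$ such that for every subtree $S$ of $T$, the set $\{c(\{s,t\}):\{s,t\}\in S^{[2]}\}$ has at least $3$ elements.
   Context: Trees are subsets $T\subseteq{}^{<\omega_1}p$ (functions from countable ordinals into $p=\{0,\dots,p-1\}$) closed under initial segments, ordered by $s<_T t$ iff $t$ properly extends $s$; $\lg(s)$ denotes the domain (an ordinal) of $s$, and $s^\frown j$ is the one-point extension of $s$ by value $j$. $T$ is an Aronszajn tree if it is uncountable, every level is countable, and it has no uncountable chain. $T$ is special if it is a union of countably many antichains. For $s,t\in T$, the meet $s\wedge t$ is the longest common initial segment of $s$ and $t$. A subtree of $T$ is an uncountable subset $S\subseteq T$ closed under meets ($s,t\in S\Rightarrow s\wedge t\in S$). A subtree $S$ is binary if every node of $S$ has at most two distinct immediate successors in $S$ (i.e. elements of $S$ above it with no element of $S$ strictly in between). $T$ is binarisable if every subtree of $T$ contains a binary subtree. $T^{[2]}=\{\{s,t\}: s<_T t\}$, and for $S\subseteq T$, $S^{[2]}=\{\{s,t\}: s,t\in S,\ s<_T t\}$. Colouring Axiom for Trees (CAT), in the form used here: for every Aronszajn tree $T$, every subtree $S$ of $T$ (including $S=T$) and every partition $S=K_0\cup K_1$, there are an uncountable $X\subseteq S$ and $i<2$ such that $x\wedge y\in K_i$ for all distinct $x,y\in X$; and likewise for partitions of $S$ into any finite number of pieces.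 *)

(* Defs.v *)
From mathcomp Require Import all_boot.
From mathcomp Require Import boolp classical_sets cardinality.
Set Implicit Arguments. Unset Strict Implicit. Unset Printing Implicit Defensive.
Local Open Scope classical_set_scope.

(** This characterizes omega_1
   up to order isomorphism, so its elements are the countable ordinals. *)
Definition is_omega1 (W : Type) (lt : W -> W -> Prop) : Prop :=
  [/\ (forall a, ~ lt a a),
      (forall a b c, lt a b -> lt b c -> lt a c),
      (forall a b, lt a b \/ a = b \/ lt b a)
    & well_founded lt] /\
  ~ countable [set: W] /\ (forall a, countable [set b | lt b a]).

Section Trees.
Variables (W : Type) (lt : W -> W -> Prop).

Definition le (a b : W) := lt a b \/ a = b.

(** A node is a pair (lg s, values); the value function is normalised to be
    0 outside lg s.  [valid p s] says s is an element of ^{<omega_1} p,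
    i.e. a function lg(s) -> {0,...,p-1}. *)
Definition node := (W * (W -> nat))%type.
Definition lg (s : node) : W := s.1.

Definition valid (p : nat) (s : node) : Prop :=
  forall b, (lt b s.1 -> s.2 b < p) /\ (~ lt b s.1 -> s.2 b = 0).

Definition prefix (s t : node) : Prop :=
  le s.1 t.1 /\ forall b, lt b s.1 -> s.2 b = t.2 b.

Definition tlt (s t : node) : Prop := prefix s t /\ lt s.1 t.1.

Definition is_tree (p : nat) (T : set node) : Prop :=
  (forall s, T s -> valid p s) /\
  (forall t a, T t -> le a t.1 ->
     exists s, T s /\ s.1 = a /\ prefix s t).

Definition is_meet (p : nat) (s t m : node) : Prop :=
  valid p m /\ prefix m s /\ prefix m t /\
  forall u, valid p u -> prefix u s -> prefix u t -> prefix u m.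

Definition level (T : set node) (a : W) : set node := [set t | T t /\ t.1 = a].

Definition chain (C : set node) : Prop :=
  forall s t, C s -> C t -> s <> t -> tlt s t \/ tlt t s.

Definition antichain (A : set node) : Prop :=
  forall s t, A s -> A t -> ~ tlt s t.

Definition aronszajn (p : nat) (T : set node) : Prop :=
  [/\ is_tree p T, ~ countable T,
      (forall a, countable (level T a))
    & forall C, C `<=` T -> chain C -> countable C].

Definition special (T : set node) : Prop :=
  exists A : nat -> set node, T = \bigcup_n A n /\ forall n, antichain (A n).

Definition subtree (p : nat) (T S : set node) : Prop :=
  [/\ S `<=` T, ~ countable S
    & forall s t, S s -> S t -> exists m, S m /\ is_meet p s t m].

Definition imm_succ (S : set node) (s u : node) : Prop :=
  S u /\ tlt s u /\ ~ (exists v, S v /\ tlt s v /\ tlt v u).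

Definition binary (S : set node) : Prop :=
  forall s u1 u2 u3, S s -> imm_succ S s u1 -> imm_succ S s u2 -> imm_succ S s u3 ->
    u1 = u2 \/ u1 = u3 \/ u2 = u3.

Definition binarisable (p : nat) (T : set node) : Prop :=
  forall S, subtree p T S -> exists S', S' `<=` S /\ subtree p T S' /\ binary S'.

(** CAT: for every Aronszajn tree T \subseteq ^{<omega_1} q (any q), every
    subtree S of T (including T itself) and every partition of S into n
    finitely many pieces K_0,...,K_{n-1} (given by k : node -> nat with
    x \in K_(k x)), there are an uncountable X \subseteq S and i < n with
    x /\ y \in K_i for all distinct x, y \in X. *)
Definition CAT : Prop :=
  forall (q : nat) (T : set node), aronszajn q T ->
  forall S, (S = T \/ subtree q T S) ->
  forall (n : nat) (k : node -> nat), (forall x, S x -> k x < n) ->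
  exists X i, [/\ X `<=` S, ~ countable X, i < n &
    forall x y, X x -> X y -> x <> y ->
      forall m, S m -> is_meet q x y m -> k m = i].

End Trees.

(* Main.v *)
Require Import Defs.
From mathcomp Require Import all_boot.
From mathcomp Require Import boolp classical_sets cardinality.
Import Defs.
Set Implicit Arguments. Unset Strict Implicit. Unset Printing Implicit Defensive.
Local Open Scope classical_set_scope.

Section Gen.
Variables (W : Type) (lt : W -> W -> Prop) (Hw : is_omega1 lt) (p : nat).

Let irr : forall a, ~ lt a a. Proof. by case: Hw => -[]. Qed.
Let trn : forall a b c, lt a b -> lt b c -> lt a c. Proof. by case: Hw => -[]. Qed.
Let tot : forall a b, lt a b \/ a = b \/ lt b a. Proof. by case: Hw => -[]. Qed.
Let wf : well_founded lt. Proof. by case: Hw => -[]. Qed.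

Lemma wmin (P : W -> Prop) x : P x -> exists a, P a /\ forall b, P b -> ~ lt b a.
Proof.
move=> Px; apply: contrapT => H; move: Px; elim/(well_founded_ind wf): x => x IH Px.
apply: H; exists x; split => // b Pb lbx; exact: IH lbx Pb.
Qed.

Lemma node_eq (a b : node W) : valid lt p a -> valid lt p b -> a.1 = b.1 ->
  (forall c, lt c a.1 -> a.2 c = b.2 c) -> a = b.
Proof.
case: a b => [a1 a2] [b1 b2] /= va vb e12 H; subst b1; congr pair.
apply: funext => c; case: (pselect (lt c a1)) => h; first exact: H.
by move: (proj2 (va c) h) (proj2 (vb c) h) => /= -> ->.
Qed.

Lemma prefix_tlt (a b : node W) : valid lt p a -> valid lt p b ->
  prefix lt a b -> a <> b -> tlt lt a b.
Proof.
move=> va vb [[l|e] H] nab; first by split => //; split => //; left.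
by exfalso; apply: nab; apply: node_eq.
Qed.

Lemma prefix_comm (a b t : node W) : prefix lt a t -> prefix lt b t ->
  le lt a.1 b.1 -> prefix lt a b.
Proof.
move=> [_ Ha] [_ Hb] lab; split => // c lc; rewrite Ha // Hb //.
by case: lab => [l|<-] //; apply: trn lc l.
Qed.

Lemma tlt_trans (a b c : node W) : tlt lt a b -> tlt lt b c -> tlt lt a c.
Proof.
move=> [[_ Hab] lab] [[_ Hbc] lbc]; have l := trn lab lbc.
split => //; split; first by left.
by move=> d ld; rewrite Hab // Hbc //; apply: trn ld lab.
Qed.

Lemma tlt_prefix (a b : node W) : tlt lt a b -> prefix lt a b.
Proof. by case. Qed.

Lemma le_of_not_lt a b : ~ lt b a -> le lt a b.
Proof. by move=> h; case: (tot a b) => [l|[e|l]]; [left|right|]. Qed.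

Lemma meet_split (x y m : node W) : valid lt p x -> valid lt p y ->
  is_meet lt p x y m -> tlt lt m x -> tlt lt m y -> x.2 m.1 <> y.2 m.1.
Proof.
move=> vx vy [vm [pmx [pmy mx]]] [_ lmx] [_ lmy] exy.
have [a [la amin]] := wmin lmx.
have amin' : forall b, lt m.1 b -> le lt a b by move=> b h; apply: le_of_not_lt; exact: amin.
pose s : node W := (a, fun b => if pselect (lt b a) then x.2 b else 0).
have vs : valid lt p s.
  move=> b /=; case: pselect => h; split => h'; try by case: (h' h).
  - case: (amin' _ lmx) => [l|e]; first exact: (proj1 (vx b) (trn h l)).
    by subst; apply: (proj1 (vx b)).
  - by [].
  - by [].
have ble : forall b, lt b a -> le lt b m.1.
  by move=> b h; apply: le_of_not_lt => h'; apply: (amin b h').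
have ps : prefix lt s m.
  apply: mx => //.
    split; first exact: amin'.
    by move=> b /= h; case: pselect.
  split; first by apply: amin'.
  move=> b; rewrite /s /= => h; case: (pselect (lt b a)) => [h1|nh] /=; last by case: nh.
  case: (ble b h) => [l|e]; last by rewrite e.
  by rewrite -(proj2 pmx b l) -(proj2 pmy b l).
case: ps => /= [[l|e] _]; first by apply: irr (trn l la).
by subst; apply: irr la.
Qed.

Lemma meet_cases (x y m : node W) : valid lt p x -> valid lt p y -> x <> y ->
  is_meet lt p x y m ->
  tlt lt x y \/ tlt lt y x \/ (tlt lt m x /\ tlt lt m y /\ x.2 m.1 <> y.2 m.1).
Proof.
move=> vx vy nxy M; have M' := M; case: M' => [vm [pmx [pmy _]]].
case: (pselect (m = x)) => [e|nx]; first by left; subst; apply: prefix_tlt.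
case: (pselect (m = y)) => [e|ny]; first by right; left; subst; apply: prefix_tlt.
have h1 := prefix_tlt vm vx pmx nx; have h2 := prefix_tlt vm vy pmy ny.
by right; right; split => //; split => //; apply: meet_split.
Qed.


Lemma encode (U : set (node W)) (h B : node W -> nat) :
  (forall x, U x -> valid lt p x) ->
  (forall x y, U x -> U y -> exists z, U z /\ is_meet lt p x y z) ->
  (forall s t, U s -> U t -> tlt lt s t -> h s <> h t /\ h s < B t) ->
  countable U.
Proof.
move=> vU mU hU.
have cmp : forall a b t, U a -> U b -> tlt lt a t -> tlt lt b t -> a <> b ->
    tlt lt a b \/ tlt lt b a.
  move=> a b t Ua Ub [pa _] [pb _] nab.
  case: (tot a.1 b.1) => [l|[e|l]].
  - by left; apply: prefix_tlt => //; [exact: vU|exact: vU|apply: (prefix_comm pa pb); left].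
  - by left; apply: prefix_tlt => //; [exact: vU|exact: vU|apply: (prefix_comm pa pb); right].
  - right; apply: prefix_tlt => //; [exact: vU|exact: vU|apply: (prefix_comm pb pa); left; exact: l|].
    by move=> e; apply: nab.
pose ent t i : option nat := match pselect (exists s, U s /\ tlt lt s t /\ h s = i) with
   left e => Some (t.2 (projT1 (cid e)).1) | right _ => None end.
have ent_some : forall s t, U s -> U t -> tlt lt s t -> ent t (h s) = Some (t.2 s.1).
  move=> s t Us Ut st; rewrite /ent; case: pselect => [e|ne]; last first.
    by exfalso; apply: ne; exists s.
  case: (cid e) => s' [Us' [s't hs']] /=; congr Some.
  suff -> : s' = s by [].
  apply: contrapT => ns; case: (cmp _ _ _ Us' Us s't st ns) => c.
  - exact: (proj1 (hU _ _ Us' Us c)) hs'.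
  - exact: (proj1 (hU _ _ Us Us' c)) (esym hs').
have ent_none : forall t i v, ent t i = Some v -> exists s, U s /\ tlt lt s t /\ h s = i.
  move=> t i v; rewrite /ent; case: pselect => // e _; exact: e.
pose code t := mkseq (ent t) (B t).
apply/countable_injP; exists (fun t => pickle (code t)).
move=> t t'; rewrite !in_setE => Ut Ut' /(pcan_inj pickleK_inv) ec.
apply: contrapT => nt.
have [z [Uz M]] := mU t t' Ut Ut'.
have sz : B t = B t' by have := congr1 size ec; rewrite !size_mkseq.
have nthe : forall i, i < B t -> ent t i = ent t' i.
  by move=> i hi; have := congr1 (fun s => nth None s i) ec; rewrite !nth_mkseq // -sz.
case: (meet_cases (vU _ Ut) (vU _ Ut') nt M) => [tt'|[t't|[zt [zt' d]]]].
- have [ne lt'] := hU t t' Ut Ut' tt'.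
  have := ent_some t t' Ut Ut' tt'; rewrite -nthe; last by rewrite sz.
  case/ent_none => s [Us [st hs]]; exact: (proj1 (hU s t Us Ut st)) hs.
- have [ne lt'] := hU t' t Ut' Ut t't.
  have := ent_some t' t Ut' Ut t't; rewrite nthe //.
  case/ent_none => s [Us [st hs]]; exact: (proj1 (hU s t' Us Ut' st)) hs.
- have e1 := ent_some z t Uz Ut zt; have e2 := ent_some z t' Uz Ut' zt'.
  have := nthe (h z) (proj2 (hU z t Uz Ut zt)); rewrite e1 e2 => -[]; exact: d.
Qed.

End Gen.

Lemma countableU2 T (A B : set T) : countable A -> countable B -> countable (A `|` B).
Proof.
move=> cA cB.
have sub : A `|` B `<=` \bigcup_(b in [set: bool]) (if b then A else B).
  by move=> x [ax|bx]; [exists true|exists false].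
apply: (sub_countable (subset_card_le sub)); apply: bigcup_countable => //.
by case.
Qed.

Theorem theorem3 (W : Type) (lt : W -> W -> Prop) (Hw : is_omega1 lt)
  (Hcat : CAT lt) (p : nat) (Hp : 2 <= p) (T : set (node W))
  (HA : aronszajn lt p T) (Hs : special lt T) (Hb : binarisable lt p T) :
  exists c : node W -> node W -> nat,
    (forall s t, T s -> T t -> tlt lt s t -> c s t <= p) /\
    forall S, subtree lt p T S ->
      exists s1 t1 s2 t2 s3 t3,
        (S s1 /\ S t1 /\ S s2 /\ S t2 /\ S s3 /\ S t3) /\
        [/\ tlt lt s1 t1, tlt lt s2 t2 & tlt lt s3 t3] /\
        [/\ c s1 t1 <> c s2 t2, c s1 t1 <> c s3 t3 & c s2 t2 <> c s3 t3].
Proof.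
case: HA => [[vT _] _ _ chT].
case: Hs => A [eT anti].
have inA : forall t, T t -> exists k, A k t.
  by move=> t; rewrite eT => -[k _ h]; exists k.
pose nn t := match pselect (exists k, A k t) with left e => projT1 (cid e) | right _ => 0 end.
have nnA : forall t, T t -> A (nn t) t.
  move=> t Tt; rewrite /nn; case: pselect => [e|ne]; first by case: (cid e).
  by case: ne; exact: inA.
have nninj : forall s t, T s -> T t -> tlt lt s t -> nn s <> nn t.
  move=> s t Ts Tt st e; apply: (anti (nn s) s t (nnA _ Ts)) => //; rewrite e; exact: nnA.
exists (fun s t => if nn s < nn t then t.2 s.1 else p).
split.
  move=> s t Ts Tt [_ l]; case: ifP => // _; apply: ltnW; exact: (proj1 (vT t Tt s.1) l).
move=> S [ST ncS mS].
have vS : forall x, S x -> valid lt p x by move=> x /ST; exact: vT.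
have [s3 [t3 [Ss3 [St3 [st3 ns3]]]]] :
    exists s t, S s /\ S t /\ tlt lt s t /\ ~ (nn s < nn t).
  apply: contrapT => H; apply: ncS; apply: (@encode _ _ Hw p S nn nn vS mS).
  move=> s t Ss St st.
  split; first exact: nninj (ST _ Ss) (ST _ St) st.
  by apply: contrapT => nlt; apply: H; exists s, t.
pose D m j := [set t | S t /\ tlt lt m t /\ t.2 m.1 = j].
have [m [j [j' [Sm [njj [ncD ncD']]]]]] : exists m j j', S m /\ j <> j' /\
    ~ countable (D m j) /\ ~ countable (D m j').
  apply: contrapT => H.
  pose e m := match pselect (exists j, ~ countable (D m j)) with
      left ex => projT1 (cid ex) | right _ => p end.
  have eP : forall m j, S m -> j <> e m -> countable (D m j).
    move=> m j Sm; rewrite /e; case: pselect => [ex|ne] nj; last first.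
      by apply: contrapT => nc; case: ne; exists j.
    apply: contrapT => ncj; apply: H; move: nj; case: (cid ex) => j' ncj' /= nj.
    by exists m, j, j'.
  pose G := [set t | S t /\ forall r, S r -> tlt lt r t -> t.2 r.1 = e r].
  have cG : countable G.
    apply: chT; first by move=> t [/ST].
    move=> s t [Ss Gs] [St Gt] nst; have [z [Sz M]] := mS s t Ss St.
    case: (meet_cases Hw (vS _ Ss) (vS _ St) nst M) => [|[|[zs [zt d]]]];
      [by left|by right|].
    by case: d; rewrite (Gs z Sz zs) (Gt z Sz zt).
  apply: ncS.
  have sub : S `<=` G `|` \bigcup_(s in G) \bigcup_(j in [set j | j <> e s]) D s j.
    move=> t St; case: (pselect (G t)) => [Gt|nGt]; [by left|right].
    have [r0 [Sr0 [rt0 ne0]]] : exists r, S r /\ tlt lt r t /\ t.2 r.1 <> e r.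
      apply: contrapT => H'; apply: nGt; split => // r Sr rt.
      by apply: contrapT => ne; apply: H'; exists r.
    have [a [[r [Sr [rt [ner ra]]]] amin]] := wmin Hw
      (P := fun a => exists r, S r /\ tlt lt r t /\ t.2 r.1 <> e r /\ r.1 = a)
      (ex_intro _ r0 (conj Sr0 (conj rt0 (conj ne0 erefl)))).
    exists r.
      split => // r' Sr' r'r; have r't := tlt_trans Hw r'r rt.
      rewrite (proj2 (tlt_prefix rt) _ (proj2 r'r)).
      apply: contrapT => ne'; apply: (amin r'.1); first by exists r'.
      by rewrite -ra; exact: (proj2 r'r).
    by exists (t.2 r.1).
  apply: (sub_countable (subset_card_le sub)); apply: countableU2 => //.
  apply: bigcup_countable => // s [Ss _]; apply: bigcup_countable => //.
  by move=> i; apply: eP.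
have big : forall m j, S m -> ~ countable (D m j) -> exists t, D m j t /\ nn m < nn t.
  move=> m0 j0 Sm0 nc; apply: contrapT => H; apply: nc.
  apply: (@encode _ _ Hw p (D m0 j0) nn (fun _ => (nn m0).+1)).
  - by move=> x [Sx _]; exact: vS.
  - move=> x y [Sx [mx ex]] [Sy [my ey]]; have [z [Sz M]] := mS x y Sx Sy.
    exists z; split => //.
    have M' := M; case: M' => [vz [pzx [pzy mz]]].
    have pmz : prefix lt m0 z := mz m0 (vS _ Sm0) (tlt_prefix mx) (tlt_prefix my).
    have mz' : tlt lt m0 z.
      apply: (prefix_tlt (vS _ Sm0) vz pmz) => ez; subst z.
      by apply: (meet_split Hw (vS _ Sx) (vS _ Sy) M mx my); rewrite ex ey.
    split => //; split => //; rewrite (proj2 pzx _ (proj2 mz')); exact: ex.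
  - move=> s t Ds [St [mt _]] st; split; first by exact: nninj (ST _ Ds.1) (ST _ St) st.
    rewrite ltnS leqNgt; apply/negP => l; apply: H; by exists s.
have [t1 [[St1 [mt1 et1]] n1]] := big m j Sm ncD.
have [t2 [[St2 [mt2 et2]] n2]] := big m j' Sm ncD'.
have jp : j < p by rewrite -et1; exact: (proj1 (vS _ St1 m.1) (proj2 mt1)).
have jp' : j' < p by rewrite -et2; exact: (proj1 (vS _ St2 m.1) (proj2 mt2)).
exists m, t1, m, t2, s3, t3; split; first by do !split.
split; first by split.
have -> : (nn s3 < nn t3) = false by apply/negP.
rewrite n1 n2 et1 et2; split => // ee.
- by rewrite ee ltnn in jp.
- by rewrite ee ltnn in jp'.
Qed.
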